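(* Let $t\ge0$, $\ell\ge1$ and $k\ge1$ be integers. Let $G$ be a graph contained in $H\boxtimes L\boxtimes K_\ell$, where $H$ and $L$ are graphs and $H$ has treewidth at most $t$. Let $d:=\Delta(G^{\lfloor k/2\rfloor})$ and $D:=\Delta(L^{\lfloor k/2\rfloor})$. Then $G^k$ is contained in $J\boxtimes L^{2\lfloor k/2\rfloor+1}\boxtimes K_{\ell(d+1)(D+1)}$ for some graph $J$ with treewidth at most $\binom{2\lfloor k/2\rfloor+t+1}{t}-1$.
   Context: Graphs are finite, simple, undirected. Contained means isomorphic to a subgraph. The strong product $G_1\boxtimes G_2$ has vertex set $V(G_1)\times V(G_2)$ with distinct $(a,v),(b,u)$ adjacent iff ($a=b$ or $ab\in E(G_1)$) and ($u=v$ or $uv\in E(G_2)$). For an integer $m\ge0$, the $m$-th power $G^m$ has vertex set $V(G)$ with distinct $u,v$ adjacent iff $\mathrm{dist}_G(u,v)\le m$ (so $G^0$ is edgeless). $\Delta$ denotes maximum degree and $K_n$ the complete graph on $n$ vertices. *)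

(* Defs.v *)
From mathcomp Require Import all_boot.
Set Implicit Arguments. Unset Strict Implicit. Unset Printing Implicit Defensive.

Record graph := Graph { vert : finType; adj : rel vert }.
Arguments adj : clear implicits.

Definition simple (G : graph) : Prop :=
  symmetric (adj G) /\ irreflexive (adj G).

Definition contained (G H : graph) : Prop :=
  exists f : vert G -> vert H,
    injective f /\ forall x y, adj G x y -> adj H (f x) (f y).

Definition sprod (G1 G2 : graph) : graph :=
  @Graph (vert G1 * vert G2)%type
    (fun x y => (x != y) && ((x.1 == y.1) || adj G1 x.1 y.1)
                          && ((x.2 == y.2) || adj G2 x.2 y.2)).

Definition complete (n : nat) : graph := @Graph 'I_n (fun x y => x != y).

Fixpoint reach {G : graph} (m : nat) (u v : vert G) : bool :=
  match m with
  | 0 => u == v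
  | m'.+1 => reach m' u v || [exists w, reach m' u w && adj G w v]
  end.

Definition gpow (G : graph) (m : nat) : graph :=
  @Graph (vert G) (fun u v => (u != v) && reach m u v).

Definition maxdeg (G : graph) : nat :=
  \max_(v : vert G) #|[set w | adj G v w]|.

(* trees: simple, nonempty, connected, and every edge is a bridge (acyclic) *)
Definition is_tree (T : graph) : Prop :=
  simple T /\ (exists x : vert T, True) /\
  (forall x y : vert T, connect (adj T) x y) /\
  (forall x y : vert T, adj T x y ->
     ~~ connect (fun a b => adj T a b &&
                  ~~ (((a == x) && (b == y)) || ((a == y) && (b == x)))) x y).

Definition tree_decomposition_width_le (G : graph) (T : graph)
    (B : vert T -> {set vert G}) (w : nat) : Prop :=
  is_tree T /\
  (forall v : vert G, exists i, v \in B i) /\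
  (forall u v : vert G, adj G u v -> exists i, (u \in B i) && (v \in B i)) /\
  (forall v : vert G, forall i j, v \in B i -> v \in B j ->
     connect (fun a b => adj T a b && (v \in B a) && (v \in B b)) i j) /\
  (forall i, #|B i| <= w.+1).

Definition treewidth_le (G : graph) (w : nat) : Prop :=
  exists (T : graph) (B : vert T -> {set vert G}),
    @tree_decomposition_width_le G T B w.

(* Main.v *)
Require Import Defs.
From mathcomp Require Import all_boot zify.
Set Implicit Arguments. Unset Strict Implicit. Unset Printing Implicit Defensive.

Section ReachLemmas.
Variable G : graph.

Lemma reachS n (u v : vert G) : reach n u v -> reach n.+1 u v.
Proof. by move=> h /=; rewrite h. Qed.

Lemma reach_mono n n' (u v : vert G) : n <= n' -> reach n u v -> reach n' u v.
Proof.
move=> le; elim: n' le => [|n' IH]; first by rewrite leqn0 => /eqP ->.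
rewrite leq_eqVlt => /orP [/eqP -> //|lt] h; apply: reachS; exact: IH.
Qed.

Lemma reach_step n (u w v : vert G) : reach n u w -> adj G w v -> reach n.+1 u v.
Proof. move=> h1 h2 /=; apply/orP; right; apply/existsP; exists w; by rewrite h1. Qed.

Lemma reach_step_eq n (u w v : vert G) : reach n u w -> (w = v \/ adj G w v) -> reach n.+1 u v.
Proof. move=> h [<-|a]; [exact: reachS | exact: reach_step a]. Qed.

Lemma reach0 (u v : vert G) : reach 0 u v -> u = v.
Proof. by move=> /eqP. Qed.

Lemma reachSE n (u v : vert G) : reach n.+1 u v ->
  reach n u v \/ exists w, reach n u w /\ adj G w v.
Proof. move=> /= /orP [h|/existsP [w /andP [h1 h2]]]; [by left | right; by exists w]. Qed.

Lemma reach_cat a b (u w v : vert G) : reach a u w -> reach b w v -> reach (a + b) u v.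
Proof.
elim: b v => [|b IH] v h1; first by move=> /eqP <-; rewrite addn0.
move=> /reachSE [h|[x [h h']]]; rewrite addnS.
  by apply: reachS; exact: IH.
apply: reach_step h'; exact: IH.
Qed.

Lemma reach_split a b (u v : vert G) : reach (a + b) u v ->
  exists w, reach a u w /\ reach b w v.
Proof.
elim: b v => [|b IH] v; first by rewrite addn0 => h; exists v; split=> //=.
rewrite addnS => /reachSE [h|[x [h h']]].
  have [w [h1 h2]] := IH _ h; exists w; split=> //; exact: reachS.
have [w [h1 h2]] := IH _ h; exists w; split=> //; exact: reach_step h'.
Qed.

Hypothesis symG : symmetric (adj G).

Lemma reach_sym n (u v : vert G) : reach n u v -> reach n v u.
Proof.
elim: n u v => [|n IH] u v; first by move=> /eqP ->; rewrite /= eqxx.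
move=> /reachSE [h|[w [h h']]]; first by apply: reachS; exact: IH.
have h1 : reach 1 v w by apply: (@reach_step 0 v v w) => //=; rewrite symG.
have := reach_cat h1 (IH _ _ h); by rewrite add1n.
Qed.

End ReachLemmas.

Lemma reach_map (G G' : graph) (g : vert G -> vert G') n u v :
  (forall x y, adj G x y -> g x = g y \/ adj G' (g x) (g y)) ->
  reach n u v -> reach n (g u) (g v).
Proof.
move=> hg; elim: n v => [|n IH] v; first by move=> /eqP ->; rewrite /= eqxx.
move=> /reachSE [h|[w [h h']]]; first by apply: reachS; exact: IH.
apply: reach_step_eq (IH _ h) _; exact: hg.
Qed.

Section Abstract.
Variable X : finType.
Variables (tp bt : X -> nat).

Definition stp (x y : X) := (tp y <= tp x) && (tp x <= bt y).

Fixpoint AR (V : {set X}) (s : nat) (S : {set X}) : {set X} :=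
  match s with
  | 0 => S
  | s'.+1 => AR V s' S :|: [set y in V | [exists x in AR V s' S, stp x y]]
  end.

Definition cov (V : {set X}) i := [set x in V | (tp x <= i) && (i <= bt x)].

Lemma AR_mono V s s' S : s <= s' -> AR V s S \subset AR V s' S.
Proof.
move=> le; elim: s' le => [|s' IH]; first by rewrite leqn0 => /eqP ->.
rewrite leq_eqVlt => /orP [/eqP -> //|lt].
apply: subset_trans (IH lt) _; exact: subsetUl.
Qed.

Lemma AR0 V s : AR V s set0 = set0.
Proof.
elim: s => //= s ->; rewrite set0U; apply/setP => y; rewrite !inE.
by case: (y \in V) => //=; apply/existsP => [[x]]; rewrite inE.
Qed.

Lemma AR_step V s S x y : x \in AR V s S -> y \in V -> stp x y -> y \in AR V s.+1 S.
Proof. move=> hx hy st /=; rewrite !inE hy /=; apply/orP; right; apply/existsP; exists x; by rewrite hx. Qed.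

End Abstract.
Section Abstract2.
Variable X : finType.
Variables (tp bt : X -> nat).
Local Notation AR := (AR tp bt).
Local Notation cov := (cov tp bt).
Local Notation stp := (stp tp bt).

Lemma ARm (V : {set X}) s s' (S : {set X}) x : x \in AR V s S -> s <= s' -> x \in AR V s' S.
Proof. by move=> h le; apply: (subsetP (AR_mono tp bt V S le)). Qed.

Lemma AR_subV (V : {set X}) s (S : {set X}) x : S \subset V -> x \in AR V s S -> x \in V.
Proof.
move=> sS; elim: s x => [|s IH] x /=; first by move/(subsetP sS).
by rewrite !inE => /orP [/IH|/andP []].
Qed.

Lemma covV (V : {set X}) p x : x \in cov V p -> x \in V.
Proof. by rewrite inE => /andP []. Qed.

Lemma cov_sub (V : {set X}) p : cov V p \subset V.
Proof. apply/subsetP => x; exact: covV. Qed.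

Lemma decomp (V : {set X}) p c :
  c \in cov V p -> (forall x, x \in cov V p -> tp c <= tp x) ->
  forall j, AR V j (cov V p) \subset
     AR [set x in V | (tp c <= tp x) && (x != c)] j (cov [set x in V | (tp c <= tp x) && (x != c)] p)
     :|: AR V j.-1 (cov V (tp c)).
Proof.
move=> hc hmin; set V' := [set x in V | _].
have cq : c \in cov V (tp c).
  move: hc; rewrite !inE => /andP [-> /andP [h1 h2]]; rewrite leqnn /=.
  exact: leq_trans h1 h2.
have cbt : p <= bt c by move: hc; rewrite !inE => /andP [_ /andP [_ ->]].
elim=> [|j IH].
  apply/subsetP => x hx; rewrite inE.
  case: (eqVneq x c) => [->|ne]; first by rewrite cq orbT.
  apply/orP; left; move: (hx); rewrite !inE => /andP [-> ->]; by rewrite hmin //= ne.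
apply/subsetP => y; rewrite [AR V j.+1 _]/= => /setUP [hy|].
  have := subsetP IH y hy; move=> /setUP [h|h]; apply/setUP.
    left; exact: ARm h (leqnSn j).
  right; apply: ARm h _; by case: j {IH hy}.
rewrite inE => /andP [yV /existsP [x /andP [hx st]]].
have : x \in AR V' j (cov V' p) \/ (0 < j /\ x \in AR V j.-1 (cov V (tp c))) \/ x = c.
  have := subsetP IH x hx; move=> /setUP [h|h]; first by left.
  case: j {IH} hx h => [|j] hx h; last by right; left.
  case: (eqVneq x c) => [->|ne]; first by right; right.
  left; move: (hx); rewrite /= !inE => /andP [-> ->]; by rewrite hmin //= ne.
move=> [h|[[j0 h]|xc]]; apply/setUP.
- have xV' : x \in V' := AR_subV (cov_sub V' p) h.
  have [yV'|nyV'] := boolP (y \in V').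
    left; exact: AR_step h yV' st.
  right; apply: ARm (_ : y \in AR V 0 _) (leq0n _) => /=.
  move: nyV' xV' st; rewrite /stp !inE yV /= => /negP nyV' /andP [_ /andP [qx _]] /andP [st1 st2].
  case: (eqVneq y c) => [->|ne].
    rewrite leqnn /=; apply: leq_trans cbt; by move: hc; rewrite !inE => /andP [_ /andP [-> _]].
  have : tp y < tp c by rewrite ltnNge; apply/negP => q; apply: nyV'; by rewrite q ne.
  move=> lt; rewrite (ltnW lt) /=; exact: leq_trans qx st2.
- right; have := AR_step h yV st; by case: j {IH hx h} j0.
- right; apply: ARm (_ : y \in AR V 0 _) (leq0n _) => /=.
  move: st; rewrite /stp !inE yV xc /= => /andP [-> ->]; by rewrite andbT.
Qed.

Lemma count_step s t (V : {set X}) p K :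
  (forall i, i <= p -> #|cov V i| <= t.+1) ->
  (forall V p, (forall i, i <= p -> #|cov V i| <= t.+1) -> #|AR V s (cov V p)| <= 'C(s + t.+1, t)) ->
  (forall V', (forall i, i <= p -> #|cov V' i| <= t) -> #|AR V' s.+1 (cov V' p)| <= K) ->
  #|AR V s.+1 (cov V p)| <= K + 'C(s + t.+1, t).
Proof.
move=> hyp IHs IHV.
have [E|[x0 hx0]] := set_0Vmem (cov V p); first by rewrite E AR0 cards0.
case: (arg_minnP tp hx0) => c hc0 hmin0.
have hc : c \in cov V p := hc0.
have hmin : forall x, x \in cov V p -> tp c <= tp x := hmin0.
have cbt : p <= bt c by move: hc; rewrite !inE => /andP [_ /andP [_ ->]].
have := decomp hc hmin s.+1; move/subset_leq_card => leD.
apply: (leq_trans leD); apply: (leq_trans (leq_card_setU _ _)); apply: leq_add.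
  apply: IHV => i le_ip.
  case: (ltnP i (tp c)) => lt.
    suff -> : cov [set x in V | (tp c <= tp x) && (x != c)] i = set0 by rewrite cards0.
    apply/setP => x; rewrite !inE; apply/negP => /andP [/andP [_ /andP [h1 _]] /andP [h2 _]].
    have := leq_trans h1 h2; by rewrite leqNgt lt.
  have ci : c \in cov V i.
    move: hc; rewrite !inE => /andP [-> _]; rewrite lt /=; exact: leq_trans le_ip cbt.
  have : #|cov V i| = #|cov V i :\ c|.+1 by rewrite (cardsD1 c) ci.
  move=> E; have := hyp i le_ip; rewrite E ltnS; apply: leq_trans.
  apply: subset_leq_card; apply/subsetP => x; rewrite !inE => /andP [/andP [xV /andP [_ ne]] H].
  by rewrite ne xV H.
apply: IHs => i le; apply: hyp; apply: leq_trans le _.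
by move: hc; rewrite !inE => /andP [_ /andP [-> _]].
Qed.

Lemma count_lemma t s (V : {set X}) p :
  (forall i, i <= p -> #|cov V i| <= t.+1) ->
  #|AR V s (cov V p)| <= 'C(s + t.+1, t).
Proof.
elim: t s V p => [|t IHt] s; elim: s => [|s IHs] V p hyp.
- by rewrite /= binSn; exact: hyp.
- have := count_step (K := 0) hyp IHs; rewrite add0n !bin0; apply => V' h.
  have := h p (leqnn p); rewrite leqn0 cards_eq0 => /eqP ->; by rewrite AR0 cards0.
- by rewrite /= add0n binSn; exact: hyp.
- have := count_step (K := 'C(s.+1 + t.+1, t)) hyp IHs.
  have -> : s.+1 + t.+2 = (s + t.+2).+1 by rewrite addSn.
  rewrite binS !addnS !addSn [X in _ -> _ <= X]addnC; apply => V' h; have := IHt s.+1 V' p h; by rewrite addSn addnS.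
Qed.
End Abstract2.

Lemma path_reach (G : graph) (x : vert G) p :
  path (adj G) x p -> reach (size p) x (last x p).
Proof.
elim: p x => [|y p IH] x /=; first by rewrite eqxx.
move=> /andP [a pa]; have h1 : reach 1 x y by apply: (@reach_step G 0 x x y) => //=.
have := reach_cat h1 (IH y pa); by rewrite add1n.
Qed.

Section Tree.
Variable T : graph.
Hypothesis hT : is_tree T.
Variable rho : vert T.

Lemma symT : symmetric (adj T).
Proof. by case: hT => [[]]. Qed.

Lemma irrT : irreflexive (adj T).
Proof. by case: hT => [[]]. Qed.

Lemma conn z : exists n, reach n rho z.
Proof.
case: hT => _ [_ [hc _]]; have := hc rho z; move/connectP => [p pp ->].
exists (size p); exact: path_reach.
Qed.

Definition depth z := ex_minn (conn z).

Lemma depth_reach z : reach (depth z) rho z.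
Proof. rewrite /depth; by case: ex_minnP. Qed.

Lemma depth_min z n : reach n rho z -> depth z <= n.
Proof. rewrite /depth; case: ex_minnP => m _ hm; exact: hm. Qed.

Lemma depth0 z : (depth z == 0) = (z == rho).
Proof.
apply/eqP/eqP => [h|->]; first by have := depth_reach z; rewrite h => /eqP.
by apply/eqP; rewrite -leqn0; apply: depth_min; rewrite /= eqxx.
Qed.

Definition parent z := odflt z [pick w | adj T w z && ((depth w).+1 == depth z)].

Lemma parentP z : z != rho -> adj T (parent z) z /\ (depth (parent z)).+1 = depth z.
Proof.
move=> nz; rewrite /parent; case: pickP => [w /andP [a /eqP e]|none] //=.
exfalso; move: nz; rewrite -depth0.
have := depth_reach z; case E: (depth z) => [|d] // /reachSE [h|[w [h1 h2]]].
  by have := depth_min h; rewrite E ltnn.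
have := none w; rewrite h2 E /= => /negbT/negP H _; apply: H.
rewrite eqSS eqn_leq (depth_min h1) /=.
have := depth_min (reach_step (depth_reach w) h2); by rewrite E ltnS.
Qed.

Lemma parent_root : parent rho = rho.
Proof.
rewrite /parent; case: pickP => [w /andP [_ /eqP e]|//].
by move: e; have := depth0 rho; rewrite eqxx => /eqP ->.
Qed.

Lemma depth_parent z : depth (parent z) = (depth z).-1.
Proof.
case: (eqVneq z rho) => [->|nz]; first by rewrite parent_root; have := depth0 rho; rewrite eqxx => /eqP ->.
by have [_ <-] := parentP nz.
Qed.

Lemma depth_iter j z : depth (iter j parent z) = depth z - j.
Proof. elim: j => [|j IH]; first by rewrite subn0. by rewrite iterS depth_parent IH subnS. Qed.

Lemma iter_depth z : iter (depth z) parent z = rho.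
Proof. apply/eqP; by rewrite -depth0 depth_iter subnn. Qed.

Lemma iter_rho j : iter j parent rho = rho.
Proof. elim: j => //= j ->; exact: parent_root. Qed.

Definition anc g n := (depth g <= depth n) && (iter (depth n - depth g) parent n == g).

Lemma ancP g n : reflect (exists j, iter j parent n = g) (anc g n).
Proof.
apply: (iffP idP) => [/andP [_ /eqP h]|[j <-]]; first by exists (depth n - depth g).
rewrite /anc depth_iter leq_subr /=.
case: (leqP j (depth n)) => le; first by rewrite subKn.
have -> : depth n - j = 0 by apply/eqP; rewrite subn_eq0 ltnW.
rewrite subn0 iter_depth.
have -> : j = (j - depth n) + depth n by rewrite subnK // ltnW.
by rewrite iterD iter_depth iter_rho.
Qed.

Lemma anc_refl n : anc n n.
Proof. apply/ancP; by exists 0. Qed.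

Lemma anc_root n : anc rho n.
Proof. apply/ancP; exists (depth n); exact: iter_depth. Qed.

Lemma anc_parent n : anc (parent n) n.
Proof. apply/ancP; by exists 1. Qed.

Lemma anc_trans a b c : anc a b -> anc b c -> anc a c.
Proof. move=> /ancP [j1 <-] /ancP [j2 <-]; apply/ancP; exists (j1 + j2); by rewrite iterD. Qed.

Lemma anc_depth a b : anc a b -> depth a <= depth b.
Proof. by case/andP. Qed.

Lemma anc_eq a b : anc a b -> depth a = depth b -> a = b.
Proof. by move=> /andP [_ /eqP h] e; rewrite -h e subnn. Qed.

Lemma anc_antisym a b : anc a b -> anc b a -> a = b.
Proof.
move=> h1 h2; have e : depth a = depth b by apply/eqP; rewrite eqn_leq (anc_depth h1) (anc_depth h2).
exact: anc_eq h1 e.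
Qed.

Lemma anc_total a b c : anc a c -> anc b c -> anc a b || anc b a.
Proof.
move=> /ancP [j1 <-] /ancP [j2 <-]; case: (leqP j1 j2) => le.
  apply/orP; right; apply/ancP; exists (j2 - j1); by rewrite -[in RHS](subnK le) iterD.
apply/orP; left; apply/ancP; exists (j1 - j2); by rewrite -[in RHS](subnK (ltnW le)) iterD.
Qed.

Lemma anc_cmp a b c : anc a c -> anc b c -> depth a <= depth b -> anc a b.
Proof.
move=> h1 h2 le; case/orP: (anc_total h1 h2) => // h.
have e : depth b = depth a by apply/eqP; rewrite eqn_leq le anc_depth.
by rewrite (anc_eq h e) anc_refl.
Qed.

Lemma anc_up a n : anc a n -> a != n -> anc a (parent n).
Proof.
move=> /ancP [[|j] <-]; first by rewrite eqxx.
move=> _; apply/ancP; exists j; by rewrite iterSr.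
Qed.

Lemma anc_at z i : i <= depth z ->
  anc (iter (depth z - i) parent z) z /\ depth (iter (depth z - i) parent z) = i.
Proof. move=> le; split; first by apply/ancP; eexists. by rewrite depth_iter subKn. Qed.

Lemma edge_parent a b : adj T a b -> a = parent b \/ b = parent a.
Proof.
move=> ab; case: (eqVneq a (parent b)) => [->|n1]; first by left.
case: (eqVneq b (parent a)) => [->|n2]; first by right.
exfalso; case: hT => _ [_ [_ hb]]; have := hb a b ab; move/negP; apply.
set e' := (fun x y => _).
have se : symmetric e'.
  move=> x y; rewrite /e' symT; by case: (x == a); case: (x == b); case: (y == a); case: (y == b); rewrite ?andbF ?andbT.
suff hr : forall d n, depth n <= d -> connect e' n rho.
  have ha := hr _ a (leqnn _); have hb' := hr _ b (leqnn _).
  apply: connect_trans ha _; by rewrite (sym_connect_sym se).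
elim=> [|d IH] n le.
  move: le; rewrite leqn0 depth0 => /eqP ->; exact: connect0.
case: (eqVneq n rho) => [->|nr]; first exact: connect0.
apply: connect_trans (connect1 _) (IH (parent n) _); last by rewrite depth_parent; case: (depth n) le.
have [pa _] := parentP nr.
rewrite /e' symT pa /=; apply/negP => /orP [/andP [/eqP e1 /eqP e2]|/andP [/eqP e1 /eqP e2]].
  by move: n2; rewrite -e1 e2 eqxx.
by move: n1; rewrite -e1 e2 eqxx.
Qed.

Lemma crossing (e : rel (vert T)) (Q : pred (vert T)) x y :
  connect e x y -> Q x -> ~~ Q y -> exists c d, [/\ e c d, Q c & ~~ Q d].
Proof.
move/connectP => [p pp ->]; elim: p x pp => [|z p IH] x /=; first by move=> _ ->.
move=> /andP [exz pz] qx; case qz: (Q z); first exact: IH.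
move=> _; exists x, z; by rewrite exz qx qz.
Qed.

End Tree.

Section TD.
Variables (H T : graph) (B : vert T -> {set vert H}) (t : nat).
Hypothesis hTD : @tree_decomposition_width_le H T B t.
Variable rho : vert T.

Let hT : is_tree T := hTD.1.
Local Notation depth := (depth hT rho).
Local Notation parent := (parent hT rho).
Local Notation anc := (anc hT rho).

Lemma vcover v : exists i, v \in B i.
Proof. by case: hTD => _ [h _]. Qed.
Lemma ecover u v : adj H u v -> exists i, (u \in B i) && (v \in B i).
Proof. by case: hTD => _ [_ [h _]]; apply: h. Qed.
Lemma bconn v i j : v \in B i -> v \in B j ->
  connect (fun a b => adj T a b && (v \in B a) && (v \in B b)) i j.
Proof. by case: hTD => _ [_ [_ [h _]]]; apply: h. Qed.
Lemma bsize i : #|B i| <= t.+1.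
Proof. by case: hTD => _ [_ [_ [_ h]]]. Qed.

Definition top h := odflt rho [pick n | (h \in B n) && [forall n', (h \in B n') ==> (depth n <= depth n')]].

Lemma top_spec h : h \in B (top h) /\ forall n, h \in B n -> depth (top h) <= depth n.
Proof.
rewrite /top; case: pickP => [n /andP [hn /forallP hf]|none] /=.
  split=> // n' hn'; exact: (implyP (hf n')).
exfalso; have [n0 hn0] := vcover h.
have hn0' : n0 \in [pred n | h \in B n] by [].
case: (arg_minnP depth hn0') => n hn hmin.
have hn2 : h \in B n := hn.
have := none n; rewrite hn2 /=; move/negbT/negP; apply; apply/forallP => n'; apply/implyP => hn'.
exact: hmin.
Qed.

Lemma top_in h : h \in B (top h).
Proof. by case: (top_spec h). Qed.

Lemma top_anc h n : h \in B n -> anc (top h) n.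
Proof.
move=> hn; apply/negPn/negP => nq.
have [c [d [/andP [/andP [cd hc] hd] qc nqd]]] :=
  crossing (Q := anc (top h)) (bconn (top_in h) hn) (anc_refl hT rho _) nq.
case: (edge_parent hT rho cd) => e.
  have acd : anc c d by rewrite e anc_parent.
  by rewrite (anc_trans qc acd) in nqd.
case: (eqVneq c (top h)) => [ec|nc]; last by move: nqd; rewrite e (anc_up qc) // eq_sym.
have nr : top h != rho.
  by apply/negP => /eqP er; move: nqd; rewrite er anc_root.
have [_ dd] := parentP hT nr.
have := (top_spec h).2 d hd; by rewrite e ec -dd ltnn.
Qed.

Lemma convex h n n' : h \in B n -> anc (top h) n' -> anc n' n -> h \in B n'.
Proof.
move=> hn a1 a2; case: (eqVneq (top h) n') => [<-|ne]; first exact: top_in.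
apply/negP => hn'.
have nq : ~~ anc n' (top h).
  by apply/negP => a3; move: ne; rewrite (anc_antisym a1 a3) eqxx.
have [c [d [/andP [/andP [cd hc] hd] qc nqd]]] :=
  crossing (Q := anc n') (bconn hn (top_in h)) a2 nq.
case: (edge_parent hT rho cd) => e.
  have acd : anc c d by rewrite e anc_parent.
  by rewrite (anc_trans qc acd) in nqd.
case: (eqVneq c n') => [ec|nc]; last by move: nqd; rewrite e (anc_up qc) // eq_sym.
by move: hn'; rewrite -ec hc.
Qed.

Definition A (x y : vert H) := exists n, x \in B n /\ y \in B n.
Definition U (x y : vert H) := (y \in B (top x)) && anc (top y) (top x).

Lemma A_sym x y : A x y -> A y x.
Proof. by move=> [n [h1 h2]]; exists n. Qed.

Lemma A_U x y : A x y -> U x y \/ U y x.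
Proof.
move=> [n [hx hy]]; have ax := top_anc hx; have ay := top_anc hy.
case/orP: (anc_total ax ay) => h.
  right; rewrite /U h andbT; exact: convex hx h ay.
left; rewrite /U h andbT; exact: convex hy h ax.
Qed.

Lemma U_A x y : U x y -> A x y.
Proof. move=> /andP [h _]; exists (top x); by rewrite top_in. Qed.

Lemma U_top x y : U x y -> anc (top y) (top x).
Proof. by case/andP. Qed.

Lemma UU y a b : U y a -> U y b -> U a b \/ U b a.
Proof. move=> /andP [ha _] /andP [hb _]; apply: A_U; by exists (top y). Qed.

Lemma A_refl x : A x x.
Proof. exists (top x); by rewrite top_in. Qed.

Lemma edge_A u v : adj H u v -> A u v.
Proof. move=> /ecover [i /andP [h1 h2]]; by exists i. Qed.

Section Chains.
Variable P : pred (vert H).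

Fixpoint uchain i x y : Prop :=
  match i with
  | 0 => x = y /\ P x
  | i'.+1 => P x /\ exists x', U x x' /\ uchain i' x' y
  end.

Lemma uchain_P i x y : uchain i x y -> P x /\ P y.
Proof.
elim: i x => [|i IH] x /=; first by move=> [-> ->].
move=> [px [x' [_ /IH [_ ->]]]]; by [].
Qed.

Lemma uchain_rcons i x m y : uchain i x m -> U m y -> P y -> uchain i.+1 x y.
Proof.
elim: i x => [|i IH] x /=.
  move=> [-> pm] u py; split=> //; exists y; by split.
move=> [px [x' [u h]]] u' py; split=> //; exists x'; split=> //; exact: IH h u' py.
Qed.

Lemma chainL j y m y' : uchain j y m -> U y y' -> P y' ->
  (exists j', j' <= j /\ uchain j' y' m) \/ U m y'.
Proof.
elim: j y => [|j IH] y /=; first by move=> [-> _] u _; right.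
move=> [py [y1 [u1 h]]] u' py'.
have [p1 _] := uchain_P h.
case: (UU u1 u') => u2.
  case: (IH _ h u2 py') => [[j' [le hc]]|um]; last by right.
  left; exists j'; split=> //; exact: leqW.
left; exists j.+1; split=> //=; split=> //; exists y1; by split.
Qed.

Definition NF l x y := exists m i j, [/\ i + j <= l, uchain i x m & uchain j y m].

Lemma NF_refl x : P x -> NF 0 x x.
Proof. move=> px; exists x, 0, 0; by split. Qed.

Lemma NF_mono l l' x y : l <= l' -> NF l x y -> NF l' x y.
Proof. move=> le [m [i [j [h1 h2 h3]]]]; exists m, i, j; split=> //; exact: leq_trans le. Qed.

Lemma NF_sym l x y : NF l x y -> NF l y x.
Proof. move=> [m [i [j [h1 h2 h3]]]]; exists m, j, i; split=> //; by rewrite addnC. Qed.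

Lemma NF_append l x y y' : NF l x y -> A y y' -> P y' -> NF l.+1 x y'.
Proof.
move=> [m [i [j [le hx hy]]]] a py'.
have [py _] := uchain_P hy.
case: (A_U a) => u.
  case: (chainL hy u py') => [[j' [le' hc]]|um].
    exists m, i, j'; split=> //; apply: leq_trans (leqW le); by rewrite leq_add2l.
  exists y', i.+1, 0; split.
  - by rewrite addn0 ltnS; apply: leq_trans le; exact: leq_addr.
  - exact: uchain_rcons hx um py'.
  - by [].
exists m, i, j.+1; split=> //=; first by rewrite addnS.
split=> //; exists y; by split.
Qed.

Lemma NF_chain_fwd i c m l x : uchain i c m -> NF l x c -> NF (l + i) x m.
Proof.
elim: i c l => [|i IH] c l /=; first by move=> [-> _]; rewrite addn0.
move=> [pc [c' [u h]]] nf; rewrite addnS -addSn.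
have [pc' _] := uchain_P h; apply: IH h _; exact: NF_append nf (U_A u) pc'.
Qed.

Lemma NF_chain_bwd j y m l x : uchain j y m -> NF l x m -> NF (l + j) x y.
Proof.
elim: j y l => [|j IH] y l /=; first by move=> [-> _]; rewrite addn0.
move=> [py [y1 [u h]]] nf; rewrite addnS; apply: NF_append (IH _ _ h nf) (A_sym (U_A u)) py.
Qed.

Lemma NF_comp l1 l2 c x y : NF l1 c x -> NF l2 c y -> NF (l1 + l2) x y.
Proof.
move=> /NF_sym nf1 [m [i [j [le hc hy]]]].
have := NF_chain_bwd hy (NF_chain_fwd hc nf1); apply: NF_mono.
by rewrite -addnA leq_add2l.
Qed.

End Chains.

Fixpoint TR s (S : {set vert H}) : {set vert H} :=
  match s with
  | 0 => S
  | s'.+1 => TR s' S :|: [set y | [exists x in TR s' S, U x y]]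
  end.

Lemma TRm s s' (S : {set vert H}) x : x \in TR s S -> s <= s' -> x \in TR s' S.
Proof.
move=> hx le; elim: s' le => [|s' IH]; first by rewrite leqn0 => /eqP <-.
rewrite leq_eqVlt => /orP [/eqP <- //|lt] /=; by rewrite inE IH.
Qed.

Lemma TR_step s (S : {set vert H}) x y : x \in TR s S -> U x y -> y \in TR s.+1 S.
Proof. move=> hx u /=; rewrite !inE; apply/orP; right; apply/existsP; exists x; by rewrite hx. Qed.

Lemma TR0 s (S : {set vert H}) x : x \in S -> x \in TR s S.
Proof. move=> hx; exact: TRm (_ : x \in TR 0 S) (leq0n s). Qed.

Lemma TR_sub s (S S' : {set vert H}) : S \subset S' -> TR s S \subset TR s S'.
Proof.
move=> sub; elim: s => [|s IH] //=; apply/subsetP => y; rewrite !inE => /orP [h|/existsP [x /andP [hx u]]].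
  by rewrite (subsetP IH).
apply/orP; right; apply/existsP; exists x; by rewrite (subsetP IH).
Qed.

Lemma TR_cons i (S S' : {set vert H}) y : y \in TR i S' -> S' \subset TR 1 S -> y \in TR i.+1 S.
Proof.
move=> hy sub; elim: i y hy => [|i IH] y /=; first by move/(subsetP sub).
rewrite inE => /orP [h|].
  exact: TRm (IH _ h) (leqnSn _).
rewrite inE => /existsP [x /andP [hx u]]; exact: TR_step (IH _ hx) u.
Qed.

Lemma uchain_TR P i x m : uchain P i x m -> m \in TR i [set x].
Proof.
elim: i x => [|i IH] x /=; first by move=> [-> _]; rewrite inE.
move=> [_ [x' [u h]]]; apply: TR_cons (IH _ h) _.
apply/subsetP => z; rewrite inE => /eqP ->; apply: TR_step u; by rewrite inE.
Qed.

Lemma NF_TR l x a : NF (fun h => anc (top a) (top h)) l x a -> a \in TR l [set x].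
Proof.
move=> [m [i [j [le hx ha]]]].
have key : forall j y, uchain (fun h => anc (top a) (top h)) j y m -> top y = top a -> top m = top a.
  elim=> [|j' IH] y /=; first by move=> [<- _].
  move=> [_ [y' [u h]]] e.
  have [p' _] := uchain_P h.
  apply: IH h _; apply: anc_antisym; last by exact: p'.
  by rewrite -e; exact: U_top u.
have tm := key j a ha erefl.
have hm := uchain_TR hx.
case: j ha le {key} => [|j] ha le.
  move: ha => [E _]; rewrite E; apply: TRm hm _; by rewrite addn0 in le.
have : U m a by rewrite /U tm top_in anc_refl.
move=> u; apply: TRm (TR_step hm u) _; apply: leq_trans le; by rewrite addnS ltnS leq_addr.
Qed.

Lemma TR_top s z y : y \in TR s (B z) -> anc (top y) z.
Proof.
elim: s y => [|s IH] y /=; first exact: top_anc.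
rewrite !inE => /orP [/IH //|/existsP [x /andP [hx u]]].
exact: anc_trans (U_top u) (IH _ hx).
Qed.

Lemma climb s z z' y : y \in TR s (B z) -> anc (top y) z' -> anc z' z -> y \in TR s (B z').
Proof.
elim: s y => [|s IH] y /=; first by move=> hy a1 a2; exact: convex hy a1 a2.
rewrite !inE => /orP [hy a1 a2|/existsP [x /andP [hx u]] a1 a2]; first by rewrite IH.
have ax := TR_top hx.
case/orP: (anc_total ax a2) => h.
  apply/orP; right; apply/existsP; exists x; by rewrite (IH _ hx h a2).
apply/orP; left; apply: TR0; move: u => /andP [hb _]; exact: convex hb a1 h.
Qed.

Section Count.
Variable z : vert T.
Definition tpz (x : vert H) := depth (top x).
Definition btz (x : vert H) := \max_(n in [pred n | anc n z && (x \in B n)]) depth n.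
Definition Vz := [set x | anc (top x) z].

Lemma TR_AR s : TR s (B z) \subset AR tpz btz Vz s (cov tpz btz Vz (depth z)).
Proof.
elim: s => [|s IH] /=.
  apply/subsetP => x hx; rewrite !inE top_anc //= anc_depth ?top_anc //=.
  apply: (@leq_bigmax_cond _ _ (fun n => depth n) z); by rewrite inE anc_refl hx.
apply/subsetP => y; rewrite inE => /orP [hy|].
  rewrite inE (subsetP IH) //.
rewrite inE => /existsP [x /andP [hx u]].
have ax := TR_top hx.
apply: AR_step (subsetP IH x hx) _ _.
  rewrite inE; exact: anc_trans (U_top u) ax.
rewrite /stp /tpz anc_depth ?(U_top u) //=.
apply: (@leq_bigmax_cond _ _ (fun n => depth n) (top x)); rewrite inE ax /=.
by case/andP: u.
Qed.

Lemma cov_bound i : i <= depth z -> #|cov tpz btz Vz i| <= t.+1.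
Proof.
move=> le; have [ai di] := anc_at le.
set ni := iter _ parent z in ai di.
apply: leq_trans (bsize ni); apply: subset_leq_card; apply/subsetP => x.
rewrite !inE => /andP [ax /andP [h1 h2]].
have : 0 < #|[pred n | anc n z && (x \in B n)]|.
  apply/card_gt0P; exists (top x); by rewrite inE ax top_in.
move=> /(eq_bigmax_cond (fun n => depth n)) [n0]; rewrite inE => /andP [a0 x0] e0.
rewrite /btz e0 in h2.
apply: convex x0 _ _.
  apply: anc_cmp ax ai _; by rewrite di.
apply: anc_cmp ai a0 _; by rewrite di.
Qed.

Lemma TR_card s : #|TR s (B z)| <= 'C(s + t.+1, t).
Proof.
apply: leq_trans (subset_leq_card (TR_AR s)) _.
apply: count_lemma; exact: cov_bound.
Qed.
End Count.

End TD.



Lemma card_bigcup_leq (X Y : finType) (I : {set X}) (F : X -> {set Y}) c :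
  (forall x, x \in I -> #|F x| <= c) -> #|\bigcup_(x in I) F x| <= #|I| * c.
Proof.
move=> hF; apply: (@leq_trans (\sum_(x in I) #|F x|)).
  elim/big_rec2: _ => [|i n A _ h]; first by rewrite cards0.
  apply: leq_trans (leq_card_setU _ _) _; by rewrite leq_add2l.
rewrite -sum_nat_const; exact: leq_sum.
Qed.

Lemma ball_card (Q : graph) m x : #|[set w | reach (G:=Q) m x w]| <= (maxdeg (gpow Q m)).+1.
Proof.
apply: (@leq_trans #|x |: [set w | adj (gpow Q m) x w]|).
  apply: subset_leq_card; apply/subsetP => w; rewrite !inE => hw.
  case: (eqVneq w x) => [->|ne] //=; by rewrite eq_sym ne hw.
rewrite cardsU1 -add1n; apply: leq_add; first by case: (_ \notin _).
exact: (@leq_bigmax _ (fun v => #|[set w | adj (gpow Q m) v w]|) x).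
Qed.

Section Main.
Variables (G H L T : graph) (l t m : nat) (B : vert T -> {set vert H}).
Hypothesis sG : simple G.
Variable f : vert G -> vert (sprod (sprod H L) (complete l)).
Hypothesis finj : injective f.
Hypothesis fadj : forall x y, adj G x y -> adj (sprod (sprod H L) (complete l)) (f x) (f y).
Hypothesis hTD : @tree_decomposition_width_le H T B t.
Variable rho : vert T.

Let hT : is_tree T := hTD.1.
Local Notation depth := (depth hT rho).
Local Notation parent := (parent hT rho).
Local Notation anc := (anc hT rho).
Local Notation top := (top hTD rho).
Local Notation TR := (TR hTD rho).

Definition piH (x : vert G) : vert H := (f x).1.1.
Definition piL (x : vert G) : vert L := (f x).1.2.

Lemma symG : symmetric (adj G). Proof. by case: sG. Qed.

Lemma piH_adj x y : adj G x y -> piH x = piH y \/ adj H (piH x) (piH y).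
Proof.
move=> /fadj /= /andP [/andP [_ h1] _]; rewrite /piH.
case/orP: h1 => [/eqP -> |/andP [/andP [_ h] _]]; first by left.
by case/orP: h => [/eqP ->|]; [left|right].
Qed.

Lemma piL_adj x y : adj G x y -> piL x = piL y \/ adj L (piL x) (piL y).
Proof.
move=> /fadj /= /andP [/andP [_ h1] _]; rewrite /piL.
case/orP: h1 => [/eqP -> |/andP [_ h]]; first by left.
by case/orP: h => [/eqP ->|]; [left|right].
Qed.

Lemma piH_A x y : adj G x y -> A B (piH x) (piH y).
Proof. case/piH_adj => [->|a]; [exact: (A_refl hTD rho) | exact: (edge_A hTD)]. Qed.

Definition Sn n u := [set piH x | x in [set x | reach n u x]].

Lemma tops_cmp x y : A B x y -> anc (top x) (top y) || anc (top y) (top x).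
Proof.
move=> [n [hx hy]]; exact: anc_total (top_anc hTD rho hx) (top_anc hTD rho hy).
Qed.

Lemma argroot (S : {set vert H}) a : a \in S ->
  (forall h, h \in S -> anc (top a) (top h) || anc (top h) (top a)) ->
  exists2 b, b \in S & forall h, h \in S -> anc (top b) (top h).
Proof.
move=> aS dich; case: (arg_minnP (fun h => depth (top h)) aS) => b bS bmin.
exists b => // h hS.
case/orP: (dich b bS) => hb.
  have bm : forall j, j \in S -> depth (top b) <= depth (top j) := bmin.
  have e : top a = top b.
    apply: (anc_eq hb); apply/eqP; by rewrite eqn_leq (anc_depth hb) (bm a aS).
  case/orP: (dich h hS) => hh; first by rewrite -e.
  have e2 : top h = top a.
    apply: (anc_eq hh); apply/eqP; by rewrite eqn_leq (anc_depth hh) e (bm h hS).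
  by rewrite -e -e2 anc_refl.
case/orP: (dich h hS) => hh; first exact: anc_trans hb hh.
apply: anc_cmp hb hh _; exact: bmin.
Qed.

Lemma root_exists n u : exists2 a, a \in Sn n u & forall h, h \in Sn n u -> anc (top a) (top h).
Proof.
elim: n => [|n [a aS amin]].
  exists (piH u); first by apply/imsetP; exists u; rewrite // inE /= eqxx.
  move=> h /imsetP [x]; rewrite inE => /eqP <- ->; exact: anc_refl.
have sub : Sn n u \subset Sn n.+1 u.
  apply/subsetP => h /imsetP [x]; rewrite inE => hx ->; apply/imsetP; exists x => //.
  by rewrite inE reachS.
apply: (argroot (subsetP sub a aS)) => h /imsetP [x]; rewrite inE => /reachSE [hx|[w [hw a']]] ->.
  by rewrite amin //; apply/imsetP; exists x; rewrite // inE.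
have aw : anc (top a) (top (piH w)) by rewrite amin //; apply/imsetP; exists w; rewrite // inE.
case/orP: (tops_cmp (piH_A a')) => c.
  by rewrite (anc_trans aw c).
have [n0 [h0 h1]] := piH_A a'.
exact: anc_total aw c.
Qed.

Definition phi u := odflt (piH u) [pick a | (a \in Sn m u) && [forall h, (h \in Sn m u) ==> anc (top a) (top h)]].

Lemma phi_spec u : phi u \in Sn m u /\ forall h, h \in Sn m u -> anc (top (phi u)) (top h).
Proof.
rewrite /phi; case: pickP => [a /andP [aS /forallP hf]|none] /=.
  split=> // h hS; exact: (implyP (hf h)).
exfalso; have [a aS amin] := root_exists m u.
have := none a; rewrite aS /= => /negbT/negP; apply; apply/forallP => h; apply/implyP; exact: amin.
Qed.

Definition Pu u := fun h => anc (top (phi u)) (top h).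

Lemma NF_ball u n x : n <= m -> reach n u x -> NF hTD rho (Pu u) n (piH u) (piH x).
Proof.
have inS : forall n y, n <= m -> reach n u y -> Pu u (piH y).
  move=> n' y le hy; apply: (phi_spec u).2; apply/imsetP; exists y => //; rewrite inE.
  exact: reach_mono le hy.
elim: n x => [|n IH] x le.
  move=> /eqP <-; apply: NF_refl; apply: (inS 0 u (leq0n _)); by rewrite /= eqxx.
move=> hx; have := hx; move=> /reachSE [h|[w [hw a]]].
  apply: NF_mono (leqnSn n) _; exact: IH (ltnW le) h.
exact: NF_append (IH _ (ltnW le) hw) (piH_A a) (inS _ _ le hx).
Qed.

Lemma phi_TR u x z : reach m u x -> piH x \in B z -> phi u \in TR m.*2 (B z).
Proof.
move=> hx hz.
have [pS _] := phi_spec u.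
case/imsetP: pS => xa; rewrite inE => ha ea.
have n1 := NF_ball (leqnn m) hx.
have n2 := NF_ball (leqnn m) ha.
have := NF_comp n1 n2; rewrite -ea addnn => nf.
have := NF_TR nf; apply: (subsetP (TR_sub _ _ _ _)).
by apply/subsetP => h; rewrite inE => /eqP ->.
Qed.

Definition BJ z := TR m.*2 (B z).
Definition J : graph := @Graph (vert H) (fun h h' => (h != h') && [exists z, (h \in BJ z) && (h' \in BJ z)]).

Lemma J_simple : simple J.
Proof.
split.
  move=> x y /=; rewrite eq_sym; case: (y != x) => //=.
  by apply/existsP/existsP => [] [z /andP [h1 h2]]; exists z; rewrite h1 h2.
by move=> x /=; rewrite eqxx.
Qed.

Lemma J_edge u v : reach m.*2.+1 u v -> phi u = phi v \/ adj J (phi u) (phi v).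
Proof.
move=> h; have : reach (m + (1 + m)) u v by rewrite add1n addnS addnn.
move=> /reach_split [x [hx /reach_split [y [hxy hy]]]].
have hy' := reach_sym symG hy.
have hA : A B (piH x) (piH y).
  move: hxy => /reachSE [/eqP ->|[w [/eqP <- a]]]; first exact: (A_refl hTD rho).
  exact: piH_A a.
case: hA => z [hxz hyz].
have pu := phi_TR hx hxz; have pv := phi_TR hy' hyz.
case: (eqVneq (phi u) (phi v)) => [e|ne]; first by left.
right; rewrite /= ne /=; apply/existsP; exists z; by rewrite pu pv.
Qed.

Lemma BJ_up (h : vert H) d z : depth z <= d -> h \in BJ z ->
  connect (fun a b => adj T a b && (h \in BJ a) && (h \in BJ b)) z (top h).
Proof.
elim: d z => [|d IH] z le hz.
  have a : anc (top h) z := TR_top hz.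
  move: le; rewrite leqn0 depth0 => /eqP ez.
  rewrite ez in a.
  by rewrite ez (anc_antisym a (anc_root _ _ _)); exact: connect0.
case: (eqVneq z (top h)) => [->|ne]; first exact: connect0.
have a : anc (top h) z := TR_top hz.
have nr : z != rho.
  apply/negP => /eqP ez; move: ne a; rewrite ez => ne a; by rewrite (anc_antisym a (anc_root _ _ _)) eqxx in ne.
have a' : anc (top h) (parent z) by apply: anc_up a _; rewrite eq_sym.
have hp : h \in BJ (parent z) := climb hz a' (anc_parent _ _ _).
apply: connect_trans (connect1 _) (IH _ _ hp).
  by rewrite hz hp !andbT (symT hT) (parentP hT nr).1.
by rewrite depth_parent; case: (depth z) le.
Qed.

Lemma BJ_conn (h : vert H) i j : h \in BJ i -> h \in BJ j ->
  connect (fun a b => adj T a b && (h \in BJ a) && (h \in BJ b)) i j.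
Proof.
set e := (fun a b => _).
have se : symmetric e.
  move=> a b; rewrite /e (symT hT); by case: (h \in BJ a); case: (h \in BJ b); rewrite ?andbT ?andbF.
move=> hi hj; apply: connect_trans (BJ_up (leqnn _) hi) _.
rewrite (sym_connect_sym se); exact: BJ_up (leqnn _) hj.
Qed.

Lemma BJ_card z : #|BJ z| <= ('C(m.*2 + t + 1, t) - 1).+1.
Proof.
have := TR_card hTD rho z m.*2.
have -> : m.*2 + t.+1 = m.*2 + t + 1 by rewrite addn1 addnS.
rewrite subn1 prednK // bin_gt0; lia.
Qed.

Lemma J_tw : treewidth_le J ('C(m.*2 + t + 1, t) - 1).
Proof.
exists T, BJ; split; first exact: hT.
split.
  move=> h; exists (top h); exact: (TR0 hTD rho m.*2 (top_in hTD rho h)).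
split.
  by move=> u v /= /andP [_ /existsP [z /andP [h1 h2]]]; exists z; rewrite h1 h2.
split; last exact: BJ_card.
move=> h i j; exact: (@BJ_conn h i j).
Qed.

Definition Fib a y := [set w | (phi w == a) && (piL w == y)].
Definition Xs a y := [set x | (piH x == a) && reach m y (piL x)].

Lemma Xs_card a y : #|Xs a y| <= l * (maxdeg (gpow L m)).+1.
Proof.
pose g (x : vert G) := ((f x).1.2, (f x).2).
have inj : {in Xs a y &, injective g}.
  move=> x1 x2; rewrite !inE => /andP [/eqP e1 _] /andP [/eqP e2 _] eg.
  apply: finj; move: eg e1 e2; rewrite /g /piH.
  case: (f x1) => [[h1 l1] k1]; case: (f x2) => [[h2 l2] k2] /= [-> ->] -> ->; by [].
rewrite -(card_in_imset inj).
apply: (@leq_trans #|setX [set w | reach (G:=L) m y w] [set: 'I_l]|).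
  apply: subset_leq_card; apply/subsetP => p /imsetP [x]; rewrite !inE => /andP [_ hx] ->.
  by rewrite /= hx.
rewrite cardsX cardsT card_ord mulnC leq_mul2l; apply/orP; right; exact: ball_card.
Qed.

Lemma Fib_card a y : #|Fib a y| <= l * (maxdeg (gpow G m)).+1 * (maxdeg (gpow L m)).+1.
Proof.
apply: (@leq_trans #|\bigcup_(x in Xs a y) [set w | reach m x w]|).
  apply: subset_leq_card; apply/subsetP => w; rewrite inE => /andP [/eqP ea /eqP ey].
  have [pS _] := phi_spec w; case/imsetP: pS => x; rewrite inE => hx ex.
  apply/bigcupP; exists x.
    rewrite inE -ex ea eqxx /= -ey; exact: reach_map piL_adj hx.
  rewrite inE; exact: (@reach_sym G symG _ _ _ hx).
apply: leq_trans (card_bigcup_leq (c := (maxdeg (gpow G m)).+1) _) _.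
  move=> x _; exact: ball_card.
rewrite -mulnA [_.+1 * _]mulnC mulnA leq_mul2r; apply/orP; right; exact: Xs_card.
Qed.

Definition N := l * (maxdeg (gpow G m)).+1 * (maxdeg (gpow L m)).+1.

Lemma idx_lt u : index u (enum (Fib (phi u) (piL u))) < N.
Proof.
apply: leq_trans (Fib_card (phi u) (piL u)); rewrite cardE index_mem mem_enum.
by rewrite inE !eqxx.
Qed.

Definition col u : 'I_N := Ordinal (idx_lt u).

Definition Psi u : vert (sprod (sprod J (gpow L m.*2.+1)) (complete N)) := ((phi u, piL u), col u).

Lemma Psi_inj : injective Psi.
Proof.
move=> u v; rewrite /Psi => [[e1 e2 e3]].
have : index u (enum (Fib (phi u) (piL u))) = index v (enum (Fib (phi v) (piL v))).
  exact: e3.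
rewrite -e1 -e2 => ei.
have hu : u \in enum (Fib (phi u) (piL u)) by rewrite mem_enum inE !eqxx.
have hv : v \in enum (Fib (phi u) (piL u)) by rewrite mem_enum inE e1 e2 !eqxx.
by rewrite -(nth_index u hu) ei (nth_index u hv).
Qed.

Variable k : nat.
Hypothesis hk : k <= m.*2.+1.

Lemma Psi_adj (u v : vert G) : adj (gpow G k) u v ->
  adj (sprod (sprod J (gpow L m.*2.+1)) (complete N)) (Psi u) (Psi v).
Proof.
move=> /= /andP [ne hr].
have hr' : @reach G m.*2.+1 u v := reach_mono hk hr.
rewrite (inj_eq Psi_inj) ne /= orbN andbT.
apply/orP; case E: (_ == _); [by left | right].
apply/andP; split.
  case: (J_edge hr') => [->|a]; first by rewrite eqxx.
  apply/orP; right; exact: a.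
case: (eqVneq (piL u) (piL v)) => [//|nl] /=.
exact: reach_map piL_adj hr'.
Qed.

End Main.

Unset Implicit Arguments.

Theorem theorem27 (t l k : nat) (hl : 1 <= l) (hk : 1 <= k)
    (G H L : graph) (sG : simple G) (sH : simple H) (sL : simple L)
    (hG : contained G (sprod (sprod H L) (complete l)))
    (htw : treewidth_le H t) :
  let d := maxdeg (gpow G k./2) in
  let D := maxdeg (gpow L k./2) in
  exists J : graph, simple J /\
    treewidth_le J ('C((k./2).*2 + t + 1, t) - 1) /\
    contained (gpow G k)
      (sprod (sprod J (gpow L (k./2).*2.+1)) (complete (l * d.+1 * D.+1))).
Proof.
move=> d D.
case: hG => f [finj fadj].
case: htw => T [B hTD].
have [rho _] : exists x : vert T, True by case: hTD => [[_ [h _]] _].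
have hk' : k <= (k./2).*2.+1.
  have := odd_double_half k; case: (odd k) => /= e; lia.
exists (J (k./2) hTD rho); split; first exact: J_simple.
split; first exact: J_tw.
exists (Psi (k./2) sG finj fadj hTD rho); split.
  exact: Psi_inj.
move=> u v; exact: (Psi_adj sG finj fadj hTD rho hk').
Qed.
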